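(* Let $\Gamma$ be a simple connected graph of order $n$ and let $\mu$ be the algebraic connectivity of $\Gamma$. Then: (1) if $\Gamma$ is 3-regular, then $\mathrm{girth}(\Gamma)\ge \left\lceil\frac{n(\mu-1)}{\mu}\right\rceil$; (2) if $\Gamma$ is 4-regular, then $\mathrm{girth}(\Gamma)\ge \left\lceil\frac{n(\mu-2)}{\mu}\right\rceil$; (3) if $\Gamma$ is 5-regular, then $\mathrm{girth}(\Gamma)\ge \left\lceil\frac{n\mu}{n+\mu}\right\rceil$.
   Context: $\mathrm{girth}(\Gamma)$ is the length of a shortest cycle in $\Gamma$. The algebraic connectivity is the second smallest eigenvalue of the Laplacian matrix of $\Gamma$. *)

(* Defs.v *)
From mathcomp Require Import all_boot all_order all_algebra.
From mathcomp Require Import reals.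
Set Implicit Arguments. Unset Strict Implicit. Unset Printing Implicit Defensive.
Import Order.TTheory GRing.Theory Num.Theory.
Local Open Scope ring_scope.

Definition simple_graph (n : nat) (e : rel 'I_n) : Prop :=
  symmetric e /\ irreflexive e.

Definition connected_graph (n : nat) (e : rel 'I_n) : Prop :=
  forall x y : 'I_n, connect e x y.

Definition deg (n : nat) (e : rel 'I_n) (x : 'I_n) : nat := #|[set y | e x y]|.

Definition regular (n : nat) (e : rel 'I_n) (k : nat) : Prop :=
  forall x : 'I_n, deg e x = k.

Definition has_cycle_of_length (n : nat) (e : rel 'I_n) (k : nat) : bool :=
  (3 <= k)%N && [exists t : k.-tuple 'I_n, uniq t && cycle e t].

(* Girth: length of a shortest cycle (cycles have length <= n);
   convention 0 if the graph has no cycle (never happens for the graphs below). *)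
Definition girth (n : nat) (e : rel 'I_n) : nat :=
  head 0%N [seq k <- iota 0 n.+1 | has_cycle_of_length e k].

Definition laplacian (R : ringType) (n : nat) (e : rel 'I_n) : 'M[R]_n :=
  \matrix_(i, j) (if i == j then (deg e i)%:R else if e i j then -1 else 0).

(* mu is the second smallest eigenvalue (with multiplicity) of the Laplacian:
   the characteristic polynomial factors as prod (X - s_i) with s sorted
   increasingly, and mu = s_1. *)
Definition algebraic_connectivity (R : realType) (n : nat) (e : rel 'I_n)
  (mu : R) : Prop :=
  exists s : seq R,
    [/\ size s = n, sorted <=%R s,
        char_poly (laplacian R e) = \prod_(x <- s) ('X - x%:P)
      & mu = nth 0 s 1].

(* Main.v *)
Require Import Defs.
From mathcomp Require Import all_boot all_order all_algebra.
From mathcomp Require Import reals.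
From mathcomp Require Import sesquilinear spectral.
From mathcomp.real_closed Require Import complex.
From mathcomp Require Import ring lra zify.
Import Order.TTheory GRing.Theory Num.Theory.
Local Open Scope ring_scope.
Local Open Scope sesquilinear_scope.
Local Open Scope sesquilinear_scope.

Lemma count_enumT (T : finType) (p : pred T) : count p (enum T) = #|p|.
Proof. by rewrite cardE -size_filter /enum_mem /= filter_predT. Qed.

Lemma char_poly_similar (F : fieldType) n (P M : 'M[F]_n) :
  P \in unitmx -> char_poly (invmx P *m M *m P) = char_poly M.
Proof.
move=> Pu; rewrite /char_poly /char_poly_mx.
have -> : 'X%:M - map_mx polyC (invmx P *m M *m P) =
  map_mx polyC (invmx P) *m ('X%:M - map_mx polyC M) *m map_mx polyC P.
  have h : map_mx (@polyC F) (invmx P) *m map_mx polyC P = 1%:M.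
    by rewrite -map_mxM mulVmx // map_mx1.
  by rewrite mulmxBr mulmxBl !map_mxM mul_mx_scalar -scalemxAl h scalemx1.
rewrite !det_mulmx mulrC mulrA -det_mulmx -map_mxM mulmxV // map_mx1 det1.
by rewrite mul1r.
Qed.

Lemma count_lt_nth1 (R : realDomainType) (s : seq R) :
  sorted <=%R s -> leq (count (fun x : R => x < nth (0:R) s 1) s) 1.
Proof.
case: s => [|s0 [|s1 r]] //= ; first by case: (s0 < 0).
move=> /andP[_ hp].
have hall := order_path_min le_trans hp.
rewrite ltxx add0n.
have -> : count (fun x : R => x < s1) r = 0%N.
  apply/eqP; rewrite -leqn0 leqNgt -has_count; apply/hasPn => x /(allP hall).
  by rewrite -leNgt.
by rewrite addn0; case: (s0 < s1).
Qed.

Section Key.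
Variable (R : rcfType) (n : nat).
Local Notation C := R[i].
Local Notation toC := (real_complex R).

Lemma main_ineq (A : 'M[C]_n) (P : 'M[C]_n) (D : 'rV[C]_n) (m : C) (y : 'rV[C]_n) :
  A = P^t* *m diag_mx D *m P -> P^t* *m P = 1%:M ->
  (forall i, ((y *m P^t*) 0 i == 0) || (m <= D 0 i)) ->
  m * (y *m y^t*) 0 0 <= (y *m A *m y^t*) 0 0.
Proof.
move=> hA hP hz.
have hyt : P *m y^t* = (y *m P^t*)^t* by rewrite trmx_mul map_mxM trmxCK.
have -> : y *m y^t* = (y *m P^t*) *m (y *m P^t*)^t*.
  by rewrite -hyt mulmxA -(mulmxA y) hP mulmx1.
have -> : y *m A *m y^t* = (y *m P^t*) *m diag_mx D *m (y *m P^t*)^t*.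
  by rewrite -hyt hA !mulmxA.
move: hz; set z := y *m P^t* => hz; clearbody z.
rewrite mul_mx_diag !mxE mulr_sumr; apply: ler_sum => j _; rewrite !mxE.
have [->|nz] := eqVneq (z 0 j) 0; first by rewrite !mul0r mulr0.
have := hz j; rewrite (negPf nz) /= => hj.
rewrite mulrA [m * _]mulrC -mulrA [D 0 j * _]mulrC mulrA mulrAC.
exact: (ler_wpM2l (mul_conjC_ge0 (z 0 j)) hj).
Qed.


Lemma spectral_key (A : 'M[C]_n) (s : seq R) (u v : 'rV[C]_n) :
  A \is hermsymmx -> sorted <=%R s ->
  char_poly A = \prod_(x <- s) ('X - (toC x)%:P) ->
  exists a b : C, ((a != 0) || (b != 0)) /\
    toC (nth 0 s 1) * ((a *: u + b *: v) *m (a *: u + b *: v)^t*) 0 0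
      <= ((a *: u + b *: v) *m A *m (a *: u + b *: v)^t*) 0 0.
Proof.
move=> hherm hsort hchar.
set P := spectralmx A; set D := spectral_diag A.
have hAe : A = invmx P *m diag_mx D *m P.
  by apply/orthomx_spectralP; exact: hermitian_normalmx.
have Pu : P \is unitarymx := spectral_unitarymx A.
have PiP : invmx P = P^t* := invmx_unitary Pu.
have hP : P^t* *m P = 1%:M by rewrite -PiP mulVmx // spectral_unit.
have hA : A = P^t* *m diag_mx D *m P by rewrite -PiP.
have hchar2 : char_poly A = \prod_(i < n) ('X - (D 0 i)%:P).
  rewrite hAe char_poly_similar ?spectral_unit // char_poly_trig ?diag_mx_is_trig //.
  by apply: eq_bigr => i _; rewrite mxE eqxx mulr1n.
have hperm : perm_eq (map toC s) [seq D 0 i | i <- enum 'I_n].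
  apply: prod_XsubC_eq; rewrite !big_map -hchar hchar2.
  by rewrite /index_enum !unlock.
set mu := nth 0 s 1.
have hmem : forall i, exists2 r, D 0 i = toC r & r \in s.
  move=> i; have : D 0 i \in map toC s.
    by rewrite (perm_mem hperm); apply: map_f; rewrite mem_enum.
  by case/mapP => r hr ->; exists r.
have hcnt : leq #|[pred i : 'I_n | D 0 i < toC mu]| 1.
  have e1 : count (fun i : 'I_n => D 0 i < toC mu) (enum 'I_n) =
     count (fun z : C => z < toC mu) [seq D 0 i | i <- enum 'I_n].
    by rewrite [RHS]count_map.
  rewrite -count_enumT /= e1.
  rewrite -(permP hperm) count_map.
  have -> : count (preim toC (fun z => z < toC mu)) s = count (fun x : R => x < mu) s.
    by apply: eq_count => x /=; rewrite ltcR.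
  exact: count_lt_nth1.
have hge : forall i, ~~ (D 0 i < toC mu) -> toC mu <= D 0 i.
  move=> i; have [r -> _] := hmem i; rewrite ltcR lecR.
  by rewrite -leNgt.
case: (pickP [pred i : 'I_n | D 0 i < toC mu]) => [i0 hi0 | hnone]; last first.
  exists 1, 0; split; first by rewrite oner_eq0.
  apply: main_ineq hA hP _ => i; rewrite hge ?orbT //.
  by have := hnone i; rewrite /= => ->.
have hge' : forall i, i != i0 -> toC mu <= D 0 i.
  move=> i hi; apply: hge; apply/negP => hlt.
  have : leq #|[set i0; i]| #|[pred i : 'I_n | D 0 i < toC mu]|.
    apply: subset_leq_card; apply/subsetP => j; rewrite !inE.
    by case/orP => /eqP ->.
  by rewrite cards2 eq_sym hi => /leq_trans /(_ hcnt).
set al := (u *m P^t*) 0 i0; set be := (v *m P^t*) 0 i0.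
have key : forall a b : C, a * al + b * be = 0 ->
   toC mu * ((a *: u + b *: v) *m (a *: u + b *: v)^t*) 0 0
      <= ((a *: u + b *: v) *m A *m (a *: u + b *: v)^t*) 0 0.
  move=> a b hab; apply: main_ineq hA hP _ => i.
  have [->|hi] := eqVneq i i0; last by rewrite hge' ?orbT.
  by rewrite mulmxDl -!scalemxAl [X in X == 0]mxE [X in X + _ == 0]mxE [X in _ + X == 0]mxE -/al -/be hab eqxx.
have [/andP[/eqP ha /eqP hb] | hab] := boolP ((al == 0) && (be == 0)).
  exists 1, 0; split; first by rewrite oner_eq0.
  by apply: key; rewrite ha hb !mulr0 addr0.
exists be, (- al); split.
  by move: hab; rewrite negb_and oppr_eq0 orbC.
by apply: key; rewrite mulrC mulNr addrN.
Qed.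
End Key.



Lemma sum_bool_card (R : pzSemiRingType) (T : finType) (P : pred T) :
  \sum_j ((P j)%:R : R) = (#|[set j | P j]|)%:R.
Proof.
rewrite -sum1dep_card natr_sum [RHS]big_mkcond; apply: eq_bigr => j _.
by case: (P j).
Qed.

Section Quad.
Variable (C : numClosedFieldType) (n : nat) (e : rel 'I_n).
Hypothesis (hsym : symmetric e) (hirr : irreflexive e).

Lemma deg_sum i : ((deg e i)%:R : C) = \sum_k ((e i k)%:R : C).
Proof. by rewrite sum_bool_card. Qed.

Lemma lap_entry i j : laplacian C e i j =
  (i == j)%:R * (deg e i)%:R - (e i j)%:R.
Proof.
rewrite mxE; case: eqP => [->|_] /=; first by rewrite hirr mul1r subr0.
by case: (e i j); rewrite /= mul0r ?sub0r ?oppr0.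
Qed.

Lemma lap_quad (y : 'rV[C]_n) :
  (y *m laplacian C e *m y^t*) 0 0 *+ 2 =
  \sum_i \sum_j (e i j)%:R * ((y 0 i - y 0 j) * (y 0 i - y 0 j)^*).
Proof.
pose w i j := (e i j)%:R * (y 0 i * (y 0 i)^* - y 0 i * (y 0 j)^*).
have h1 : (y *m laplacian C e *m y^t*) 0 0 = \sum_i \sum_j w i j.
  rewrite mxE; under eq_bigr => j _ do rewrite !mxE mulr_suml.
  rewrite exchange_big /=; apply: eq_bigr => i _.
  under eq_bigr => j _ do rewrite lap_entry mulrBr mulrBl.
  rewrite sumrB (bigD1 i) //= big1 => [|j /negPf hj]; last first.
    by rewrite eq_sym hj mul0r mulr0 mul0r.
  rewrite eqxx mul1r addr0 deg_sum mulr_sumr mulr_suml -sumrB; apply: eq_bigr => j _.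
  by rewrite /w mulrBr !mulrA ![(e i j)%:R * y 0 i]mulrC.
have h2 : forall i j, (e i j)%:R * ((y 0 i - y 0 j) * (y 0 i - y 0 j)^*) = w i j + w j i.
  move=> i j; rewrite /w (hsym j i) -mulrDr rmorphB /=; congr (_ * _).
  rewrite mulrBl !mulrBr; rewrite [y 0 j * (y 0 i)^*]mulrC.
  by rewrite opprB.
under eq_bigr => i _ do under eq_bigr => j _ do rewrite h2.
rewrite h1 mulr2n; under eq_bigr => i _ do rewrite big_split /=.
by rewrite big_split /= [X in _ + X = _]exchange_big.
Qed.

End Quad.


Section Graph.
Local Open Scope nat_scope.
Variable (n : nat) (e : rel 'I_n).
Hypothesis (hsym : symmetric e) (hirr : irreflexive e).

Lemma exists_cycle : (forall x, 2 < deg e x) -> 0 < n ->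
  exists c : seq 'I_n, [/\ uniq c, cycle e c & 3 <= size c].
Proof.
move=> hdeg n0.
pose P k := [exists t : k.+1.-tuple 'I_n, uniq t && sorted e t].
have exP : exists k, P k.
  exists 0; apply/existsP; exists [tuple (Ordinal n0)] => /=.
  by [].
have ubP : forall k, P k -> k <= n.
  move=> k /existsP[t /andP[hu _]].
  have := max_card (mem t); rewrite card_ord (card_uniqP hu) size_tuple.
  by move/ltnW.
case: (ex_maxnP exP ubP) => k /existsP[t /andP[hu hp]] hmax.
have hsz0 := size_tuple t.
case ht : (val t) hu hp hsz0 => [|x p] // hu hp [hsz].
have hnb : forall y, e x y -> y \in p.
  move=> y hy; apply/negPn/negP => hyp.
  have : P k.+1.
    apply/existsP; exists (cons_tuple y t) => /=.
    rewrite ht /= (hp : path e x p) andbT hsym hy andbT.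
    move: hu => /= ->; rewrite andbT inE negb_or hyp andbT.
    by apply/negP => /eqP hyx; move: hy; rewrite hyx hirr.
  by move/hmax; rewrite ltnn.
have [w hw1 hw2] : exists2 w, e x w & w != head x p.
  case: (boolP [exists w, e x w && (w != head x p)]) => [/existsP[w /andP[h1 h2]] | hn].
    by exists w.
  exfalso; have : #|[set y | e x y]| <= #|[set head x p]|.
    apply/subset_leq_card/subsetP => y; rewrite !inE => hy.
    apply/negPn/negP => hne; move/negP: hn; apply; apply/existsP; exists y.
    by rewrite hy hne.
  rewrite cards1 => h; have := hdeg x; rewrite /deg; lia.
have wp := hnb w hw1.
set i := index w p.
have hi : i < size p by rewrite index_mem.
have hi0 : 0 < i.
  rewrite lt0n; apply/negP => /eqP hi0.
  by move: hw2; rewrite -(nth_index x wp) -/i hi0 nth0 eqxx.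
exists (x :: take i.+1 p); split.
- move: hu => /= /andP[hx hu]; rewrite take_uniq // andbT.
  by apply/negP => /mem_take; apply/negP.
- rewrite /= rcons_path take_path //=.
  have -> : last x (take i.+1 p) = w.
    rewrite -nth_last size_takel //= nth_take //.
    exact: nth_index.
  by rewrite hsym.
- by rewrite /= size_takel.
Qed.


Lemma girth_spec : (exists c : seq 'I_n, [/\ uniq c, cycle e c & 3 <= size c]) ->
  exists t : seq 'I_n, [/\ uniq t, cycle e t, size t = girth e, 3 <= girth e
       & girth e <= n].
Proof.
case=> c [hu hc h3].
have hcn : size c <= n.
  by have := max_card (mem c); rewrite card_ord (card_uniqP hu).
have hk : has_cycle_of_length e (size c).
  rewrite /has_cycle_of_length h3 /=; apply/existsP; exists (in_tuple c).
  by rewrite hu hc.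
have : size c \in [seq k <- iota 0 n.+1 | has_cycle_of_length e k].
  by rewrite mem_filter hk mem_iota /= add0n ltnS.
have hF : forall k, k \in [seq k <- iota 0 n.+1 | has_cycle_of_length e k] ->
  has_cycle_of_length e k && (k \in iota 0 n.+1) by move=> k; rewrite mem_filter.
rewrite /girth; move: hF.
case: [seq k <- iota 0 n.+1 | has_cycle_of_length e k] => [|g r] //= hF _.
have /andP[hg] := hF g (mem_head _ _).
rewrite -[0 :: iota 1 n]/(iota 0 n.+1) mem_iota add0n ltnS => /andP[_ hgn].
move: hg => /andP[hg3 /existsP[t /andP[tu tc]]].
by exists t; split => //; rewrite size_tuple.
Qed.

Lemma two_nbrs (t : seq 'I_n) v : uniq t -> cycle e t -> 3 <= size t -> v \in t ->
  2 <= #|[set y | e v y & y \in t]|.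
Proof.
move=> hu hc h3 hv.
case: (rot_to hv) => i q hrot.
have hu' : uniq (v :: q) by rewrite -hrot rot_uniq.
have hc' : cycle e (v :: q) by rewrite -hrot rot_cycle.
have hs' : size (v :: q) = size t by rewrite -hrot size_rot.
have hmem : forall y, (y \in v :: q) = (y \in t) by move=> y; rewrite -hrot mem_rot.
clear hrot.
case: q hu' hc' hs' hmem => [|a [|b r]] hu' hc' hs' hmem;
  [by rewrite -hs' in h3 | by rewrite -hs' in h3 |].
set l := last b r.
have hva : e v a by move: hc'; rewrite /= => /andP[].
have hlv : e l v.
  by move: hc'; rewrite /= rcons_path => /and4P[]...
have hl : l \in b :: r by exact: mem_last.
have hal : a != l.
  apply/negP => /eqP hal; move: hu'; rewrite /= hal hl /=.
  by rewrite !andbF.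
have : #|[set a; l]| <= #|[set y | e v y & y \in t]|.
  apply/subset_leq_card/subsetP => y; rewrite !inE => /orP[] /eqP ->.
    by rewrite hva -hmem !inE eqxx orbT.
  by move: hl; rewrite hsym hlv -hmem !inE /= => /orP[->|->]; rewrite ?orbT.
by rewrite cards2 hal.
Qed.

End Graph.


Lemma final_arith (R : realType) (mu : R) (n g d : nat) :
  0 <= mu -> (3 <= g)%N -> (g <= n)%N ->
  mu * (n%:R - g%:R) <= (d%:R - 2) * n%:R ->
  [/\ d = 3%N -> Num.ceil (n%:R * (mu - 1) / mu) <= g%:Z,
      d = 4%N -> Num.ceil (n%:R * (mu - 2) / mu) <= g%:Z
    & d = 5%N -> Num.ceil (n%:R * mu / (n%:R + mu)) <= g%:Z].
Proof.
move=> mu0 g3 gn hk.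
have g3' : 3 <= (g%:R : R) by rewrite (ler_nat R 3 g).
have gn' : (g%:R : R) <= n%:R by rewrite ler_nat.
split=> hd; rewrite hd in hk; rewrite ceil_le_int -[g%:Z%:~R]/(g%:R : R).
- have [->|mup] := eqVneq mu 0; first by rewrite invr0 mulr0.
  have mup' : 0 < mu by rewrite lt_def mup mu0.
  rewrite ler_pdivrMr //; move: hk; nra.
- have [->|mup] := eqVneq mu 0; first by rewrite invr0 mulr0.
  have mup' : 0 < mu by rewrite lt_def mup mu0.
  rewrite ler_pdivrMr //; move: hk; nra.
- have np : 0 < n%:R + mu by lra.
  rewrite ler_pdivrMr //; move: hk; nra.
Qed.


Section Main.
Variable (R : realType) (n : nat) (e : rel 'I_n).
Hypothesis (hsym : symmetric e) (hirr : irreflexive e).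
Local Notation C := R[i].
Local Notation toC := (real_complex R).

Lemma toC_conj (r : R) : (toC r)^* = toC r.
Proof. by apply: conj_Creal; apply/complex_realP; exists r. Qed.

Lemma lapC : laplacian C e = map_mx toC (laplacian R e).
Proof.
apply/matrixP => i j; rewrite !mxE.
by case: eqP => _; rewrite ?rmorph_nat //; case: (e i j); rewrite ?rmorphN1 ?rmorph0.
Qed.

Lemma lap_herm : laplacian C e \is hermsymmx.
Proof.
apply: realsym_hermsym.
  apply/is_hermitianmxP; rewrite expr0 scale1r; apply/matrixP => i j.
  rewrite !mxE eq_sym (hsym j i); by case: eqP => [->|].
apply/mxOverP => i j; rewrite mxE.
by case: eqP => _; rewrite ?realn //; case: (e i j); rewrite ?realN ?real0 ?real1.
Qed.

Lemma charC (s : seq R) :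
  char_poly (laplacian R e) = \prod_(x <- s) ('X - x%:P) ->
  char_poly (laplacian C e) = \prod_(x <- s) ('X - (toC x)%:P).
Proof.
by move=> h; rewrite lapC -map_char_poly h map_prod_XsubC.
Qed.

Lemma quad_ge0 (y : 'rV[C]_n) : 0 <= (y *m laplacian C e *m y^t*) 0 0.
Proof.
rewrite -(pmulrn_lge0 _ (isT : (0 < 2)%N)) lap_quad //.
apply: sumr_ge0 => i _; apply: sumr_ge0 => j _.
by apply: mulr_ge0; [exact: ler0n | exact: mul_conjC_ge0].
Qed.

Lemma norm_pos (y : 'rV[C]_n) : y != 0 -> 0 < (y *m y^t*) 0 0.
Proof.
move=> hy.
have [i hi] : exists i, y 0 i != 0.
  case: (pickP (fun i => y 0 i != 0)) => [i hi | h]; first by exists i.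
  exfalso; move/negP: hy; apply.
  by apply/eqP/matrixP => a b; rewrite ord1 mxE; have := h b => /negbFE /eqP.
rewrite mxE (bigD1 i) //= !mxE.
have h1 : 0 < y 0 i * (y 0 i)^* by rewrite mul_conjC_gt0.
apply: (lt_le_trans h1); rewrite lerDl.
by apply: sumr_ge0 => j _; rewrite !mxE; exact: mul_conjC_ge0.
Qed.

Lemma roots_ge0 (s : seq R) :
  char_poly (laplacian R e) = \prod_(x <- s) ('X - x%:P) ->
  forall r, r \in s -> 0 <= r.
Proof.
move=> /charC hc r hr.
have : eigenvalue (laplacian C e) (toC r).
  by rewrite eigenvalue_root_char hc -(map_prod_XsubC toC) rmorph_root // root_prod_XsubC.
case/eigenvalueP => v hv vn0.
have := quad_ge0 v; rewrite hv -scalemxAl mxE.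
by rewrite pmulr_lge0 ?norm_pos // ler0c.
Qed.


Lemma key_bound (s : seq R) (t : seq 'I_n) (d : nat) :
  regular e d -> (2 <= d)%N -> uniq t -> cycle e t -> (3 <= size t)%N ->
  (size t <= n)%N -> sorted <=%R s ->
  char_poly (laplacian R e) = \prod_(x <- s) ('X - x%:P) -> size s = n ->
  nth 0 s 1 * (n%:R - (size t)%:R) <= (d%:R - 2) * n%:R.
Proof.
move=> hreg hd2 hu hc h3 htn hsort hchar hsz.
set g := size t; set mu := nth 0 s 1.
have mu0 : 0 <= mu.
  have hh : (1 < size s)%N by rewrite hsz; lia.
  exact: (roots_ge0 s hchar _ (mem_nth 0 hh)).
pose chi i : R := (i \in t)%:R.
pose X i : R := n%:R * chi i - g%:R.
have hchi2 : forall i, chi i * chi i = chi i.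
  by move=> i; rewrite /chi; case: (i \in t); rewrite ?mulr1 ?mulr0.
have hsumchi : \sum_i chi i = g%:R.
  by rewrite /chi sum_bool_card cardsE (card_uniqP hu).
have hdeg : forall i, \sum_j ((e i j)%:R : R) = d%:R.
  by move=> i; rewrite sum_bool_card; have := hreg i; rewrite /deg => ->.
have hnb : forall i, i \in t -> 2%:R <= \sum_j ((e i j)%:R : R) * chi j.
  move=> i hi.
  have -> : \sum_j ((e i j)%:R : R) * chi j = \sum_j ((e i j && (j \in t))%:R : R).
    by apply: eq_bigr => j _; rewrite /chi -natrM mulnb.
  by rewrite sum_bool_card ler_nat two_nbrs.
have SX0 : \sum_i X i = 0.
  rewrite /X sumrB -mulr_sumr hsumchi sumr_const card_ord mulrC.
  by rewrite mulr_natr subrr.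
have SX2 : \sum_i X i ^+ 2 = g%:R * n%:R * (n%:R - g%:R).
  have hx : forall i, X i ^+ 2 = (n%:R ^+ 2 - 2 * n%:R * g%:R) * chi i + g%:R ^+ 2.
    move=> i; have hc2 := hchi2 i; rewrite /X.
    transitivity (n%:R ^+ 2 * (chi i * chi i) - 2 * n%:R * g%:R * chi i + (g%:R : R) ^+ 2).
      by ring.
    by rewrite hc2; ring.
  under eq_bigr => i _ do rewrite hx.
  rewrite big_split /= -mulr_sumr hsumchi sumr_const card_ord -mulr_natr.
  ring.
have hterm : forall i j, (e i j)%:R * (X i - X j) ^+ 2 = n%:R ^+ 2 *
    ((e i j)%:R * chi i + (e i j)%:R * chi j - 2 * ((e i j)%:R * chi i * chi j)).
  move=> i j; have hi := hchi2 i; have hj := hchi2 j; rewrite /X.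
  transitivity (n%:R ^+ 2 * ((e i j)%:R * (chi i * chi i) + (e i j)%:R * (chi j * chi j)
     - 2 * ((e i j)%:R * chi i * chi j))); first by ring.
  by rewrite hi hj.
have A1 : \sum_i \sum_j ((e i j)%:R : R) * chi i = g%:R * d%:R.
  under eq_bigr => i _ do rewrite -mulr_suml hdeg.
  by rewrite -mulr_sumr hsumchi mulrC.
have A2 : \sum_i \sum_j ((e i j)%:R : R) * chi j = g%:R * d%:R.
  rewrite exchange_big /=.
  under eq_bigr => j _ do under eq_bigr => i _ do rewrite (hsym i j).
  under eq_bigr => j _ do rewrite -mulr_suml hdeg.
  by rewrite -mulr_sumr hsumchi mulrC.
have A3 : 2 * g%:R <= \sum_i \sum_j ((e i j)%:R : R) * chi i * chi j.
  rewrite -hsumchi mulr_sumr; apply: ler_sum => i _.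
  under eq_bigr => j _ do rewrite mulrAC.
  rewrite -mulr_suml mulrC.
  case: (boolP (i \in t)) => hi.
    by rewrite /chi hi /= mulr1 mul1r; exact: hnb.
  by rewrite /chi (negPf hi) /= mulr0 mul0r.
have hS : \sum_i \sum_j ((e i j)%:R : R) * (X i - X j) ^+ 2 =
   n%:R ^+ 2 * (g%:R * d%:R + g%:R * d%:R - 2 * \sum_i \sum_j ((e i j)%:R : R) * chi i * chi j).
  under eq_bigr => i _ do under eq_bigr => j _ do rewrite hterm.
  under eq_bigr => i _ do rewrite -mulr_sumr.
  rewrite -mulr_sumr -{1}A1 -A2; congr (_ * _).
  rewrite mulr_sumr -big_split /= -sumrB; apply: eq_bigr => i _.
  by rewrite mulr_sumr -big_split /= -sumrB.
set K := \sum_i \sum_j ((e i j)%:R : R) * chi i * chi j.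
move: hS; set S := \sum_i \sum_j ((e i j)%:R : R) * (X i - X j) ^+ 2 => hS.
clearbody X chi.
pose oC : 'rV[C]_n := const_mx 1.
pose xC : 'rV[C]_n := \row_i toC (X i).
have [a [b [hab hineq]]] := @spectral_key _ _ (laplacian C e) s oC xC lap_herm hsort (charC s hchar).
move: hineq; set y := a *: oC + b *: xC => hineq.
have hy : forall i, y 0 i = a + b * toC (X i) by move=> i; rewrite !mxE mulr1.
clearbody y.
have hyc : forall i, (y^t*) i 0 = (y 0 i)^* by move=> i; rewrite !mxE.
have hQ : (y *m laplacian C e *m y^t*) 0 0 *+ 2 = b * b^* * toC S.
  rewrite lap_quad // /S rmorph_sum mulr_sumr; apply: eq_bigr => i _.
  rewrite rmorph_sum mulr_sumr; apply: eq_bigr => j _.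
  rewrite !hy.
  have -> : a + b * toC (X i) - (a + b * toC (X j)) = b * toC (X i - X j).
    by rewrite rmorphB; ring.
  by rewrite rmorphM /= toC_conj rmorphM rmorph_nat rmorphXn; ring.
have hN : (y *m y^t*) 0 0 = a * a^* * n%:R + b * b^* * toC (\sum_i X i ^+ 2).
  rewrite mxE.
  transitivity (\sum_i (a * a^* + (a * b^* + b * a^*) * toC (X i) + b * b^* * toC (X i ^+ 2))).
    apply: eq_bigr => i _; rewrite hyc hy rmorphD rmorphM /= toC_conj rmorphXn.
    by ring.
  rewrite big_split /= big_split /= sumr_const card_ord -!mulr_sumr -!rmorph_sum SX0.
  by rewrite rmorph0 mulr0 addr0 mulr_natr.
have [al hal] : exists al : R, a * a^* = toC al.
  by apply/complex_realP/ger0_real/mul_conjC_ge0.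
have [be hbe] : exists be : R, b * b^* = toC be.
  by apply/complex_realP/ger0_real/mul_conjC_ge0.
have al0 : 0 <= al by rewrite -ler0c -hal mul_conjC_ge0.
have be0 : 0 <= be by rewrite -ler0c -hbe mul_conjC_ge0.
have hpos : (0 < al) || (0 < be).
  move: hab => /orP[ha|hb]; apply/orP; [left|right]; rewrite lt_def ?al0 ?be0 andbT.
    by apply: contra ha => /eqP h0; rewrite -mul_conjC_eq0 hal h0 rmorph0.
  by apply: contra hb => /eqP h0; rewrite -mul_conjC_eq0 hbe h0 rmorph0.
have hR : mu * (al * n%:R + be * (g%:R * n%:R * (n%:R - g%:R))) *+ 2 <= be * S.
  have h2 : (toC mu * (y *m y^t*) 0 0) *+ 2 <= (y *m laplacian C e *m y^t*) 0 0 *+ 2.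
    by rewrite lerMn2r hineq orbT.
  rewrite hQ hN hal hbe in h2.
  rewrite -SX2 -lecR rmorphMn !rmorphM rmorphD !rmorphM rmorph_nat.
  exact: h2.
have g3' : 3 <= (g%:R : R) by rewrite (ler_nat R 3 g).
have gn' : (g%:R : R) <= n%:R by rewrite ler_nat.
have d2 : 2 <= (d%:R : R) by rewrite (ler_nat R 2 d).
have hSle : S <= n%:R ^+ 2 * (2 * g%:R * d%:R - 4 * g%:R).
  rewrite hS; apply: ler_wpM2l; first exact: exprn_ge0 (ler0n _ _).
  move: A3; rewrite -/K; lra.
case: (boolP (0 < be)) => hb.
  have hK : 0 < be * g%:R * n%:R by rewrite !mulr_gt0 //; lra.
  have : mu * (n%:R - g%:R) * (be * g%:R * n%:R) <= (d%:R - 2) * n%:R * (be * g%:R * n%:R).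
    have h1 : be * S <= be * (n%:R ^+ 2 * (2 * g%:R * d%:R - 4 * g%:R)).
      exact: ler_wpM2l.
    have h2 : 0 <= mu * (al * n%:R) by rewrite !mulr_ge0 //.
    move: hR h1 h2; rewrite mulr2n; nra.
  by rewrite ler_pM2r.
have hb0 : be = 0 by apply/eqP; rewrite eq_le be0 andbT leNgt.
have ha : 0 < al by move: hpos; rewrite hb0 ltxx orbF.
have hn : 0 < al * n%:R by rewrite mulr_gt0 //; lra.
have : mu * (al * n%:R) <= 0 by move: hR; rewrite hb0 mulr2n; nra.
move=> hmu; have mu00 : mu = 0.
  apply/eqP; rewrite eq_le mu0 andbT; move: hmu; rewrite pmulr_lle0 //.
rewrite mu00 mul0r; apply: mulr_ge0; lra.
Qed.


Lemma reg_bound (s : seq R) (d : nat) :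
  regular e d -> (3 <= d)%N -> sorted <=%R s ->
  char_poly (laplacian R e) = \prod_(x <- s) ('X - x%:P) -> size s = n -> (0 < n)%N ->
  [/\ 0 <= nth 0 s 1, (3 <= girth e)%N, (girth e <= n)%N &
     nth 0 s 1 * (n%:R - (girth e)%:R) <= (d%:R - 2) * n%:R].
Proof.
move=> hreg hd3 hsort hchar hsz npos.
have hdeg : forall x, (2 < deg e x)%N by move=> x; rewrite hreg.
have [c hc] := @exists_cycle n e hsym hirr hdeg npos.
have [t [tu tc tg t3 tn]] := @girth_spec n e (ex_intro _ c hc).
have hh : (1 < size s)%N by rewrite hsz; lia.
split => //; first exact: (roots_ge0 s hchar _ (mem_nth 0 hh)).
have hd2 : (2 <= d)%N by lia.
have t3' : (3 <= size t)%N by rewrite tg.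
have tn' : (size t <= n)%N by rewrite tg.
rewrite -tg; exact: (key_bound s t d hreg hd2 tu tc t3' tn' hsort hchar hsz).
Qed.

End Main.

Local Close Scope sesquilinear_scope.

Theorem theorem5 (R : realType) (n : nat) (e : rel 'I_n) (mu : R) :
  simple_graph e -> connected_graph e -> algebraic_connectivity e mu ->
  [/\ regular e 3 -> Num.ceil (n%:R * (mu - 1) / mu) <= (girth e)%:Z,
      regular e 4 -> Num.ceil (n%:R * (mu - 2) / mu) <= (girth e)%:Z
    & regular e 5 -> Num.ceil (n%:R * mu / (n%:R + mu)) <= (girth e)%:Z].
Proof.
move=> [hsym hirr] _ [s [hsz hsort hchar hmu]].
have [n0|npos] := posnP n.
  have -> : (n%:R : R) = 0 by rewrite n0.
  by split=> _; rewrite !mul0r ceil_le_int -[(girth e)%:Z%:~R]/((girth e)%:R : R) ler0n.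
have H d : regular e d -> (3 <= d)%N ->
   [/\ d = 3%N -> Num.ceil (n%:R * (mu - 1) / mu) <= (girth e)%:Z,
      d = 4%N -> Num.ceil (n%:R * (mu - 2) / mu) <= (girth e)%:Z
    & d = 5%N -> Num.ceil (n%:R * mu / (n%:R + mu)) <= (girth e)%:Z].
  move=> hreg hd.
  have [h0 hg3 hgn hk] := @reg_bound R n e hsym hirr s d hreg hd hsort hchar hsz npos.
  rewrite hmu; exact: final_arith.
split=> hreg.
- by have [h _ _] := H 3%N hreg isT; exact: h.
- by have [_ h _] := H 4%N hreg isT; exact: h.
- by have [_ _ h] := H 5%N hreg isT; exact: h.
Qed.
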